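(* Let $L=(l_1,\dots,l_n)$, $n\ge 4$, be a generic length vector satisfying the strict triangle inequality, and let $l_a\ge l_b\ge l_c$ be its three largest entries (for distinct indices $a,b,c$). (1) If $l_b+l_c<|L|/2$ (i.e. the moduli space of $L$ is connected), then any two vertices of $\Gamma(L)$ are connected by a path in $\Gamma(L)$ of length at most $13$. (2) If $l_b+l_c>|L|/2$ (i.e. the moduli space of $L$ is disconnected), then any two vertices of $\Gamma(L)$ lying in the same connected component of $\Gamma(L)$ are connected by a path in $\Gamma(L)$ of length at most $7$.
   Context: Let $n\ge 4$ and $L=(l_1,\dots,l_n)$ be positive reals with $l_i<\sum_{j\ne i}l_j$ for every $i$ (strict triangle inequality), and generic: there is no $J\subseteq[n]$ with $\sum_{i\in J}l_i=\sum_{i\notin J}l_i$. Here $[n]=\{1,\dots,n\}$ and $|L|=\sum_{i=1}^n l_i$. A set $I\subseteq[n]$ is short if $\sum_{i\in I}l_i<|L|/2$ and long otherwise. A cyclically ordered partition of $[n]$ into $k$ parts is a sequence $(A_1,\dots,A_k)$ of pairwise disjoint nonempty sets with union $[n]$, considered up to cyclic shifts $(A_1,\dots,A_k)\sim(A_2,\dots,A_k,A_1)$; there is no ordering inside a part. It is admissible if every part is short. The graph $\Gamma(L)$ has as vertices the admissible cyclically ordered partitions of $[n]$ into 3 parts, written $(I,J,K)$, and as edges the admissible cyclically ordered partitions into 4 parts $(A,B,C,D)$; such an edge is incident to each of the partitions $(A\cup B,C,D)$, $(A,B\cup C,D)$, $(A,B,C\cup D)$, $(D\cup A,B,C)$ that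 is admissible. Equivalently, two vertices are adjacent iff one is obtained from the other by moving a nonempty proper subset of one part into another part. The length of a path is its number of edges. ($\Gamma(L)$ is the 1-skeleton of a cell decomposition of the moduli space of planar configurations of $L$ modulo orientation-preserving isometries.) *)

(* Defs.v *)
From HB Require Import structures.
From mathcomp Require Import all_boot all_order all_algebra.
Set Implicit Arguments. Unset Strict Implicit. Unset Printing Implicit Defensive.
Import Order.TTheory GRing.Theory Num.Theory.
Local Open Scope ring_scope.

Section Polygon.
Variables (R : realFieldType) (n : nat) (L : 'I_n -> R).

Definition totlen : R := \sum_(i < n) L i.

Definition setlen (A : {set 'I_n}) : R := \sum_(i in A) L i.

Definition short (A : {set 'I_n}) : bool := setlen A < totlen / 2%:R.

Definition ordpart (s : seq {set 'I_n}) : bool :=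
  [&& all (fun A => A != set0) s,
      pairwise (fun A B : {set 'I_n} => A :&: B == set0) s &
      \bigcup_(A <- s) A == setT].

Definition admissible (s : seq {set 'I_n}) : bool :=
  ordpart s && all short s.

Definition cyc_eq (s t : seq {set 'I_n}) : Prop := exists k : nat, t = rot k s.

(* representatives of vertices of Gamma(L): admissible 3-part sequences *)
Definition is_vertex (s : seq {set 'I_n}) : bool := (size s == 3%N) && admissible s.

(* representatives of edges of Gamma(L): admissible 4-part sequences *)
Definition is_edge (s : seq {set 'I_n}) : bool := (size s == 4%N) && admissible s.

Definition merges (e : seq {set 'I_n}) : seq (seq {set 'I_n}) :=
  match e with
  | [:: A; B; C; D] =>
      [:: [:: A :|: B; C; D]; [:: A; B :|: C; D];
          [:: A; B; C :|: D]; [:: D :|: A; B; C]]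
  | _ => [::]
  end.

Definition incident (e v : seq {set 'I_n}) : Prop :=
  is_edge e /\ exists2 m, m \in merges e & admissible m /\ cyc_eq m v.

Definition adjacent (u v : seq {set 'I_n}) : Prop :=
  exists e, incident e u /\ incident e v.

Definition walk_le (k : nat) (u v : seq {set 'I_n}) : Prop :=
  exists p : seq (seq {set 'I_n}),
    [/\ (size p <= k)%N, last u p = v &
        forall i, (i < size p)%N -> adjacent (nth u (u :: p) i) (nth u p i)].

End Polygon.

(* Main.v *)
Require Import Defs.
From HB Require Import structures.
From mathcomp Require Import all_boot all_order all_algebra.
From mathcomp Require Import lra zify.
Import Order.TTheory GRing.Theory Num.Theory.
Local Open Scope ring_scope.
Set Implicit Arguments. Unset Strict Implicit. Unset Printing Implicit Defensive.

Definition ex3 (p q r : bool) :=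
  [|| p && ~~ q && ~~ r, ~~ p && q && ~~ r | ~~ p && ~~ q && r].
Definition ex4 (p q r s : bool) :=
  [|| p && ~~ q && ~~ r && ~~ s, ~~ p && q && ~~ r && ~~ s,
      ~~ p && ~~ q && r && ~~ s | ~~ p && ~~ q && ~~ r && s].

Ltac bcase := repeat match goal with
 | |- context [ ?x \in ?A ] => let E := fresh "E" in case E: (x \in A) => //=
 end.

Ltac bcase2 := repeat match goal with
 | |- context [ ?x \in ?A ] => let E := fresh "E" in case E: (x \in A) => //=
 | |- context [ ?x == ?y ] =>
     let E := fresh "E" in case E: (x == y) => //=
 end.

Section Poly.
Variables (R : realFieldType) (n : nat) (L : 'I_n -> R).
Hypothesis Lpos : forall i, 0 < L i.
Hypothesis tri : forall i, L i < \sum_(j < n | j != i) L j.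
Hypothesis gen : forall J : {set 'I_n}, setlen L J != setlen L (~: J).

Local Notation T := (totlen L).
Local Notation sl := (setlen L).
Local Notation sh := (short L).
Implicit Types (X Y Z S A B C D P Q W U : {set 'I_n}) (x y z e : 'I_n).

Definition part3 (A B C : {set 'I_n}) := forall x, ex3 (x \in A) (x \in B) (x \in C).
Definition part4 (A B C D : {set 'I_n}) :=
  forall x, ex4 (x \in A) (x \in B) (x \in C) (x \in D).

Lemma setlenE X : sl X = \sum_i (if i \in X then L i else 0).
Proof. by rewrite /setlen big_mkcond. Qed.

Lemma shortE X : sh X = (2%:R * sl X < T).
Proof.
rewrite /short; apply/idP/idP => h; lra.
Qed.

Lemma setlenC X : sl (~: X) = T - sl X.
Proof.
apply/eqP; rewrite eq_sym subr_eq /totlen !setlenE -big_split /=; apply/eqP.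
by apply: eq_bigr => i _; rewrite inE; case: (i \in X); rewrite ?add0r ?addr0.
Qed.

Lemma setlenU X Y : (forall x, x \in X -> x \in Y -> False) ->
  sl (X :|: Y) = sl X + sl Y.
Proof.
move=> d; rewrite !setlenE -big_split /=; apply: eq_bigr => i _.
rewrite inE; move: (d i); case: (i \in X); case: (i \in Y) => //= h;
  rewrite ?add0r ?addr0 //; by case: h.
Qed.

Lemma setlen_le X Y : (forall x, x \in X -> x \in Y) -> sl X <= sl Y.
Proof.
move=> s; rewrite !setlenE; apply: ler_sum => i _.
move: (s i) (Lpos i); case: (i \in X); case: (i \in Y) => //= h; first by move: (h isT).
by move=> /ltW.
Qed.

Lemma setlen_ge0 X : 0 <= sl X.
Proof. rewrite setlenE; apply: sumr_ge0 => i _; case: (i \in X) => //; exact: ltW. Qed.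

Lemma setlen1 x : sl [set x] = L x.
Proof. by rewrite /setlen big_set1. Qed.

Lemma totlen1 x : T = L x + \sum_(j < n | j != x) L j.
Proof. by rewrite /totlen (bigD1 x). Qed.

Lemma Tpos (x : 'I_n) : 0 < T.
Proof. move: (tri x) (Lpos x); rewrite (totlen1 x); lra. Qed.

Lemma gen2 X : 2%:R * sl X != T.
Proof.
apply/eqP => h; move: (gen X); rewrite setlenC -h; move/eqP; apply; lra.
Qed.

Lemma short_le X : 2%:R * sl X <= T -> sh X.
Proof. move: (gen2 X); rewrite shortE => /eqP h1 h2; lra. Qed.

Lemma not_short X : ~~ sh X -> T < 2%:R * sl X.
Proof. move: (gen2 X); rewrite shortE => /eqP h1 h2; lra. Qed.

Lemma shortC X : sh (~: X) = ~~ sh X.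
Proof.
case h: (sh X) => /=.
  apply/negbTE; rewrite shortE setlenC; move: h; rewrite shortE; lra.
apply: short_le; rewrite setlenC; move/negbT/not_short: h; lra.
Qed.

Lemma short_sub X Y : (forall x, x \in X -> x \in Y) -> sh Y -> sh X.
Proof. move=> s; rewrite !shortE; move: (setlen_le s); lra. Qed.

Lemma short1 x : sh [set x].
Proof. rewrite shortE setlen1; move: (tri x); rewrite (totlen1 x); lra. Qed.


Lemma ordpart3 A B C : ordpart [:: A; B; C] <->
  [/\ A != set0, B != set0, C != set0 & part3 A B C].
Proof.
rewrite /ordpart /= !big_cons big_nil /= !andbT.
split.
  case/and3P => /and3P[-> -> ->] /andP[/andP[dAB dAC] dBC] /eqP U.
  split=> // x; move/setP: U => /(_ x); rewrite !inE /= orbF => U.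
  move/eqP/setP: dAB => /(_ x); move/eqP/setP: dAC => /(_ x);
  move/eqP/setP: dBC => /(_ x); rewrite !inE /ex3; move: U; bcase.
case=> -> -> -> p /=.
have dd : forall X Y, (forall x, (x \in X) && (x \in Y) = false) -> X :&: Y == set0.
  by move=> X Y h; apply/eqP/setP => x; rewrite !inE h.
rewrite !dd ?andbT.
- apply/eqP/setP => x; rewrite !inE orbF; move: (p x); rewrite /ex3; bcase.
- by move=> x; move: (p x); rewrite /ex3; bcase.
- by move=> x; move: (p x); rewrite /ex3; bcase.
- by move=> x; move: (p x); rewrite /ex3; bcase.
Qed.

Lemma ordpart4 A B C D : ordpart [:: A; B; C; D] <->
  [/\ A != set0, B != set0, C != set0, D != set0 & part4 A B C D].
Proof.
rewrite /ordpart /= !big_cons big_nil /= !andbT.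
split.
  case/and3P => /and4P[-> -> -> ->] /and3P[/and3P[dAB dAC dAD] /andP[dBC dBD] dCD] /eqP U.
  split=> // x; move/setP: U => /(_ x); rewrite !inE /= orbF => U.
  move/eqP/setP: dAB => /(_ x); move/eqP/setP: dAC => /(_ x);
  move/eqP/setP: dAD => /(_ x); move/eqP/setP: dBC => /(_ x);
  move/eqP/setP: dBD => /(_ x); move/eqP/setP: dCD => /(_ x);
  rewrite !inE /ex4; move: U; bcase.
case=> -> -> -> -> p /=.
have dd : forall X Y, (forall x, (x \in X) && (x \in Y) = false) -> X :&: Y == set0.
  by move=> X Y h; apply/eqP/setP => x; rewrite !inE h.
rewrite !dd ?andbT.
all: try by move=> x; move: (p x); rewrite /ex4; bcase.
apply/eqP/setP => x; rewrite !inE orbF; move: (p x); rewrite /ex4; bcase.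
Qed.

Definition vtx A B C := is_vertex L [:: A; B; C].

Lemma vtxP A B C : vtx A B C <->
  [/\ A != set0, B != set0, C != set0, part3 A B C & [&& sh A, sh B & sh C]].
Proof.
rewrite /vtx /is_vertex /admissible /= !andbT.
split.
  by case/andP => /ordpart3 [h1 h2 h3 h4] h5.
by case=> h1 h2 h3 h4 h5; rewrite h5 andbT; apply/ordpart3.
Qed.

Lemma edgeP A B C D : is_edge L [:: A; B; C; D] <->
  [/\ A != set0, B != set0, C != set0, D != set0 &
      part4 A B C D /\ [&& sh A, sh B, sh C & sh D]].
Proof.
rewrite /is_edge /admissible /= !andbT.
split.
  by case/andP => /ordpart4 [h1 h2 h3 h4 h5] h6.
by case=> h1 h2 h3 h4 [h5 h6]; rewrite h6 andbT; apply/ordpart4.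
Qed.


Local Notation sq := (seq {set 'I_n}).

Lemma cyc_refl (s : sq) : cyc_eq s s.
Proof. by exists 0%N; rewrite rot0. Qed.

Lemma cyc_sym (s t : sq) : cyc_eq s t -> cyc_eq t s.
Proof.
case=> k ->; exists (size (rot k s) - k)%N.
by rewrite -{1}(rotK k s).
Qed.

Lemma rot_norm (s : sq) k : exists2 k', (k' <= size s)%N & rot k s = rot k' s.
Proof.
case: (leqP k (size s)) => h; first by exists k.
by exists 0%N => //; rewrite rot0 rot_oversize // ltnW.
Qed.

Lemma cyc_trans (s t w : sq) : cyc_eq s t -> cyc_eq t w -> cyc_eq s w.
Proof.
case=> k ->; case=> j ->.
case: (rot_norm s k) => k' hk ->.
case: (rot_norm (rot k' s) j) => j' hj ->.
rewrite size_rot in hj.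
by rewrite rot_add_mod //; eexists.
Qed.

Lemma adj_sym (u v : sq) : adjacent L u v -> adjacent L v u.
Proof. by case=> e [h1 h2]; exists e. Qed.

Lemma inc_cyc (e u u' : sq) : incident L e u -> cyc_eq u u' -> incident L e u'.
Proof.
case=> he [m hm [ha hc]] hu; split=> //; exists m => //; split=> //.
exact: cyc_trans hc hu.
Qed.

Lemma adj_cyc_r (u v v' : sq) : adjacent L u v -> cyc_eq v v' -> adjacent L u v'.
Proof. case=> e [h1 h2] h; exists e; split=> //; exact: inc_cyc h2 h. Qed.

Lemma adj_cyc_l (u u' v : sq) : adjacent L u v -> cyc_eq u u' -> adjacent L u' v.
Proof. move=> h1 h2; apply: adj_sym; apply: adj_cyc_r h2; exact: adj_sym. Qed.

Inductive rch : nat -> sq -> sq -> Prop :=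
| rch0 k u v : cyc_eq u v -> rch k u v
| rchS k u w v : adjacent L u w -> rch k w v -> rch k.+1 u v.

Lemma rch_cyc_r k u v v' : rch k u v -> cyc_eq v v' -> rch k u v'.
Proof.
elim=> {k u v} [k u v h|k u w v h _ IH] hv.
  by apply: rch0; apply: cyc_trans hv.
by apply: rchS h (IH hv).
Qed.

Lemma rch_cyc_l k u u' v : cyc_eq u u' -> rch k u v -> rch k u' v.
Proof.
move=> hu h; case: h hu => {k u v} [k u v h|k u w v h h2] hu.
  by apply: rch0; apply: cyc_trans h; apply: cyc_sym.
by apply: rchS h2; apply: adj_cyc_l h hu.
Qed.

Lemma rch_mono k k' u v : rch k u v -> (k <= k')%N -> rch k' u v.
Proof.
move=> h; elim: h k' => {k u v} [k u v h|k u w v h _ IH] k' hk; first by apply: rch0.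
case: k' hk => // k' hk; by apply: rchS h (IH _ hk).
Qed.

Lemma rch_trans k m u w v : rch k u w -> rch m w v -> rch (k + m) u v.
Proof.
elim=> {k u w} [k u w h|k u w' w h _ IH] hm.
  apply: rch_mono (leq_addl k m); exact: rch_cyc_l (cyc_sym h) hm.
by rewrite addSn; apply: rchS h (IH hm).
Qed.

Lemma rch_sym k u v : rch k u v -> rch k v u.
Proof.
elim=> {k u v} [k u v h|k u w v h _ IH]; first by apply: rch0; apply: cyc_sym.
rewrite -addn1; apply: rch_trans IH _.
by apply: rchS (adj_sym h) _; apply: rch0; apply: cyc_refl.
Qed.

Lemma rch_walk k u v : rch k u v -> cyc_eq u v \/ walk_le L k u v.
Proof.
elim=> {k u v} [k u v h|k u w v h _ IH]; first by left.
right; case: IH => [hc|[p [hp hl hn]]].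
  exists [:: v]; split=> //; case=> //= _; exact: adj_cyc_r hc.
exists (w :: p); split=> //; case=> [|i] /= hi; first by [].
rewrite (set_nth_default w u); last by rewrite /= ltnS ltnW.
rewrite [nth u p i](set_nth_default w u) //.
exact: hn.
Qed.


Definition v3 A B C : sq := [:: A; B; C].

Lemma cyc1 A B C : cyc_eq (v3 A B C) (v3 B C A).
Proof. by exists 1%N. Qed.
Lemma cyc2 A B C : cyc_eq (v3 A B C) (v3 C A B).
Proof. by exists 2%N. Qed.

Lemma vtx_rot A B C : vtx A B C -> vtx B C A.
Proof.
case/vtxP => h1 h2 h3 p /and3P[s1 s2 s3]; apply/vtxP; split=> //; last by rewrite s1 s2 s3.
by move=> x; move: (p x); rewrite /ex3; bcase.
Qed.

Lemma set0P' X : X != set0 -> exists x, x \in X.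
Proof. by case/set0Pn => x; exists x. Qed.

Lemma setU_neq0 X Y : X != set0 -> X :|: Y != set0.
Proof. by rewrite setU_eq0 => /negbTE ->. Qed.

Lemma edge_of A B C S : vtx A B C -> (forall x, x \in S -> x \in A) ->
  S != set0 -> A :\: S != set0 ->
  is_edge L [:: S; A :\: S; B; C] /\ is_edge L [:: A :\: S; S; B; C].
Proof.
case/vtxP => h1 h2 h3 p /and3P[s1 s2 s3] sS n1 n2.
have sh1 : sh S by apply: short_sub sS s1.
have sh2 : sh (A :\: S) by by apply: (short_sub _ s1) => x; rewrite inE => /andP[].
have p4 : forall x, (ex4 (x \in S) (x \in A :\: S) (x \in B) (x \in C)
     && ex4 (x \in A :\: S) (x \in S) (x \in B) (x \in C)).
  by move=> x; move: (p x) (introT implyP (sS x)); rewrite /ex3 /ex4 !inE; bcase.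
split; apply/edgeP; (split; [done|done|done|done|split]);
  rewrite ?sh1 ?sh2 ?s2 ?s3 // => x; by case/andP: (p4 x).
Qed.

Lemma vtx_adm A B C : vtx A B C -> admissible L (v3 A B C).
Proof. by case/andP. Qed.

Lemma mv12 A B C S : vtx A B C -> (forall x, x \in S -> x \in A) ->
  A :\: S != set0 -> sh (B :|: S) ->
  rch 1 (v3 A B C) (v3 (A :\: S) (B :|: S) C) /\ vtx (A :\: S) (B :|: S) C.
Proof.
move=> hv sS n2 shBS.
have hv' : vtx (A :\: S) (B :|: S) C.
  case/vtxP: hv => h1 h2 h3 p /and3P[s1 s2 s3]; apply/vtxP; split => //.
  - exact: setU_neq0.
  - by move=> x; move: (p x) (introT implyP (sS x)); rewrite /ex3 !inE; bcase.
  rewrite shBS s3 !andbT; by apply: (short_sub _ s1) => x; rewrite inE => /andP[].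
split=> //.
case: (eqVneq S set0) => [->|n1].
  by rewrite setD0 setU0; apply: rch0; apply: cyc_refl.
apply: rchS (rch0 _ (cyc_refl _)).
case: (edge_of hv sS n1 n2) => _ he.
exists [:: A :\: S; S; B; C]; split; split => //.
  exists [:: A :\: S :|: S; B; C]; first by rewrite /merges inE eqxx.
  have -> : A :\: S :|: S = A.
    by apply/setP => x; move: (introT implyP (sS x)); rewrite !inE; bcase.
  by split; [exact: vtx_adm | exact: cyc_refl].
exists [:: A :\: S; S :|: B; C]; first by rewrite /merges !inE eqxx ?orbT.
by rewrite setUC; split; [exact: vtx_adm | exact: cyc_refl].
Qed.

Lemma mv13 A B C S : vtx A B C -> (forall x, x \in S -> x \in A) ->
  A :\: S != set0 -> sh (C :|: S) ->
  rch 1 (v3 A B C) (v3 (A :\: S) B (C :|: S)) /\ vtx (A :\: S) B (C :|: S).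
Proof.
move=> hv sS n2 shCS.
have hv' : vtx (A :\: S) B (C :|: S).
  case/vtxP: hv => h1 h2 h3 p /and3P[s1 s2 s3]; apply/vtxP; split => //.
  - exact: setU_neq0.
  - by move=> x; move: (p x) (introT implyP (sS x)); rewrite /ex3 !inE; bcase.
  rewrite shCS s2 !andbT; by apply: (short_sub _ s1) => x; rewrite inE => /andP[].
split=> //.
case: (eqVneq S set0) => [->|n1].
  by rewrite setD0 setU0; apply: rch0; apply: cyc_refl.
apply: rchS (rch0 _ (cyc_refl _)).
case: (edge_of hv sS n1 n2) => he _.
exists [:: S; A :\: S; B; C]; split; split => //.
  exists [:: S :|: (A :\: S); B; C]; first by rewrite /merges inE eqxx.
  have -> : S :|: (A :\: S) = A.
    by apply/setP => x; move: (introT implyP (sS x)); rewrite !inE; bcase.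
  by split; [exact: vtx_adm | exact: cyc_refl].
exists [:: C :|: S; A :\: S; B]; first by rewrite /merges !inE eqxx ?orbT.
split; last by exists 1%N.
by move/vtx_rot: hv'; move/vtx_rot => /vtx_adm.
Qed.


Lemma vtx_rot2 A B C : vtx A B C -> vtx C A B.
Proof. by move/vtx_rot/vtx_rot. Qed.

Lemma mv21 A B C S : vtx A B C -> (forall x, x \in S -> x \in B) ->
  B :\: S != set0 -> sh (A :|: S) ->
  rch 1 (v3 A B C) (v3 (A :|: S) (B :\: S) C) /\ vtx (A :|: S) (B :\: S) C.
Proof.
move=> hv sS nn sh1; case: (mv13 (vtx_rot hv) sS nn sh1) => h1 h2; split.
  exact: rch_cyc_l (cyc_sym (cyc1 A B C)) (rch_cyc_r h1 (cyc2 _ _ _)).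
exact: vtx_rot2.
Qed.

Lemma mv23 A B C S : vtx A B C -> (forall x, x \in S -> x \in B) ->
  B :\: S != set0 -> sh (C :|: S) ->
  rch 1 (v3 A B C) (v3 A (B :\: S) (C :|: S)) /\ vtx A (B :\: S) (C :|: S).
Proof.
move=> hv sS nn sh1; case: (mv12 (vtx_rot hv) sS nn sh1) => h1 h2; split.
  exact: rch_cyc_l (cyc_sym (cyc1 A B C)) (rch_cyc_r h1 (cyc2 _ _ _)).
exact: vtx_rot2.
Qed.

Lemma mv31 A B C S : vtx A B C -> (forall x, x \in S -> x \in C) ->
  C :\: S != set0 -> sh (A :|: S) ->
  rch 1 (v3 A B C) (v3 (A :|: S) B (C :\: S)) /\ vtx (A :|: S) B (C :\: S).
Proof.
move=> hv sS nn sh1; case: (mv12 (vtx_rot2 hv) sS nn sh1) => h1 h2; split.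
  exact: rch_cyc_l (cyc1 C A B) (rch_cyc_r h1 (cyc1 _ _ _)).
exact: vtx_rot.
Qed.

Lemma mv32 A B C S : vtx A B C -> (forall x, x \in S -> x \in C) ->
  C :\: S != set0 -> sh (B :|: S) ->
  rch 1 (v3 A B C) (v3 A (B :|: S) (C :\: S)) /\ vtx A (B :|: S) (C :\: S).
Proof.
move=> hv sS nn sh1; case: (mv13 (vtx_rot2 hv) sS nn sh1) => h1 h2; split.
  exact: rch_cyc_l (cyc1 C A B) (rch_cyc_r h1 (cyc1 _ _ _)).
exact: vtx_rot.
Qed.

Lemma sum3 X Y Z : part3 X Y Z -> sl X + sl Y + sl Z = T.
Proof.
move=> p; rewrite !setlenE /totlen -!big_split; apply: eq_bigr => i _ /=.
move: (p i); rewrite /ex3.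
by case: (i \in X); case: (i \in Y); case: (i \in Z) => //= _; rewrite ?addr0 ?add0r.
Qed.


Lemma reduce P Q W e : vtx P Q W -> e \in P -> (forall z, z \in P -> L z <= L e) ->
  exists Q' W', rch 2 (v3 P Q W) (v3 [set e] Q' W') /\ vtx [set e] Q' W'.
Proof.
move=> hv eP mx.
have hv0 := hv; case/vtxP: hv0 => h1 h2 h3 p /and3P[s1 s2 s3].
pose F := fun X => (X \subset P :\ e) && sh (Q :|: X).
have F0 : F set0 by rewrite /F sub0set setU0 s2.
case: (arg_maxnP (fun X => #|X|) F0) => X /andP[/subsetP sXP shQX] maxX.
have sXP' : forall x, x \in X -> x \in P.
  by move=> x /sXP; rewrite !inE => /andP[].
have eX : e \notin X by apply/negP => /sXP; rewrite !inE eqxx.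
have n1 : P :\: X != set0 by apply/set0Pn; exists e; rewrite inE eX eP.
case: (mv12 hv sXP' n1 shQX) => r1 v1.
pose Y := (P :\ e) :\: X.
have sY : forall x, x \in Y -> x \in P :\: X.
  by move=> x; rewrite !inE => /and3P[-> _ ->].
have n2 : (P :\: X) :\: Y != set0.
  by apply/set0Pn; exists e; rewrite !inE eqxx eX eP.
have shWY : sh (W :|: Y).
  case: (eqVneq Y set0) => [->|]; first by rewrite setU0.
  case/set0Pn => z zY.
  have zX : z \notin X by move: zY; rewrite !inE => /andP[].
  have nF : ~~ F (z |: X).
    by apply/negP => hF; move: (maxX _ hF); rewrite cardsU1 zX /geq /= ltnn.
  have sub' : z |: X \subset P :\ e.
    apply/subsetP => x; rewrite !inE => /orP[/eqP ->|/sXP]; rewrite ?inE //.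
    by move: zY; rewrite !inE => /andP[].
  move: nF; rewrite /F sub' /= => /not_short hlong.
  have e1 : Q :|: (z |: X) = (Q :|: X) :|: [set z].
    by apply/setP => x; rewrite !inE; bcase2.
  rewrite e1 setlenU ?setlen1 in hlong; last first.
    move=> x; rewrite !inE => hx /eqP ex; subst x.
    by move: hx (p z) zY zX; rewrite /ex3 !inE; bcase2.
  have p3 : part3 (W :|: Y) (Q :|: X) [set e].
    move=> x; case E: (x == e).
      by move/eqP: E => ->; move: (p e) eP eX; rewrite /ex3 !inE eqxx; bcase2.
    by move: (p x) (introT implyP (sXP x)); rewrite /ex3 !inE E; bcase2.
  move: (sum3 p3); rewrite setlen1 => hs.
  have zP : z \in P by move: zY; rewrite !inE => /and3P[].
  move: (mx z zP) => hz.
  apply: short_le; lra.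
case: (mv13 v1 sY n2 shWY) => r2 v2.
have eqs : (P :\: X) :\: Y = [set e].
  apply/setP => x; move: (introT implyP (sXP x)); rewrite !inE.
  case E: (x == e); first by move/eqP: E => ->; rewrite eX eP.
  by bcase2.
rewrite eqs in r2 v2.
by exists (Q :|: X), (W :|: Y); split=> //; apply: (rch_trans r1 r2).
Qed.


Lemma neq0_of X x : x \in X -> X != set0.
Proof. by move=> h; apply/set0Pn; exists x. Qed.

Lemma pairl e X Y X' Y' : vtx [set e] X Y -> vtx [set e] X' Y' ->
  rch 2 (v3 [set e] X Y) (v3 [set e] X' Y') \/
  rch 3 (v3 [set e] X Y) (v3 [set e] Y' X').
Proof.
move=> hv hv'.
have hv0 := hv; case/vtxP: hv0 => _ nX nY p1 /and3P[_ sX sY].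
have hv0 := hv'; case/vtxP: hv0 => _ nX' nY' p2 /and3P[_ sX' sY'].
pose Pp := X :&: X'; pose Q := X :\: X'; pose Rr := X' :\: X; pose S := Y :&: Y'.
case/set0P': nX' => x0 x0X'.
case/set0P': nY' => y0 y0Y'.
case A1: (sh (Y :|: Q) && (Pp != set0)).
  case/andP: A1 => shYQ /set0P' [p0 p0P].
  left.
  have s1 : forall x, x \in Q -> x \in X by move=> x; rewrite !inE => /andP[].
  have n1 : X :\: Q != set0.
    by apply: (neq0_of (x := p0)); move: p0P (p1 p0) (p2 p0); rewrite /ex3 !inE; bcase2.
  case: (mv23 hv s1 n1 shYQ) => r1 v1.
  have s2 : forall x, x \in Rr -> x \in Y :|: Q.
    by move=> x; move: (p1 x) (p2 x); rewrite /ex3 !inE; bcase2.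
  have n2 : (Y :|: Q) :\: Rr != set0.
    by apply: (neq0_of (x := y0)); move: y0Y' (p1 y0) (p2 y0); rewrite /ex3 !inE; bcase2.
  have e1 : (X :\: Q) :|: Rr = X'.
    by apply/setP => x; move: (p1 x) (p2 x); rewrite /ex3 !inE; bcase2.
  have e2 : (Y :|: Q) :\: Rr = Y'.
    by apply/setP => x; move: (p1 x) (p2 x); rewrite /ex3 !inE; bcase2.
  have sh2 : sh ((X :\: Q) :|: Rr) by rewrite e1.
  case: (mv32 v1 s2 n2 sh2) => r2 _.
  by rewrite e1 e2 in r2; apply: (rch_trans r1 r2).
case A2: (sh (X :|: Rr) && (S != set0)).
  case/andP: A2 => shXR /set0P' [s0 s0S].
  left.
  have s1 : forall x, x \in Rr -> x \in Y.
    by move=> x; move: (p1 x) (p2 x); rewrite /ex3 !inE; bcase2.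
  have n1 : Y :\: Rr != set0.
    by apply: (neq0_of (x := s0)); move: s0S (p1 s0) (p2 s0); rewrite /ex3 !inE; bcase2.
  case: (mv32 hv s1 n1 shXR) => r1 v1.
  have s2 : forall x, x \in Q -> x \in X :|: Rr.
    by move=> x; move: (p1 x) (p2 x); rewrite /ex3 !inE; bcase2.
  have n2 : (X :|: Rr) :\: Q != set0.
    by apply: (neq0_of (x := x0)); move: x0X' (p1 x0) (p2 x0); rewrite /ex3 !inE; bcase2.
  have e1 : (X :|: Rr) :\: Q = X'.
    by apply/setP => x; move: (p1 x) (p2 x); rewrite /ex3 !inE; bcase2.
  have e2 : (Y :\: Rr) :|: Q = Y'.
    by apply/setP => x; move: (p1 x) (p2 x); rewrite /ex3 !inE; bcase2.
  have sh2 : sh ((Y :\: Rr) :|: Q) by rewrite e2.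
  case: (mv23 v1 s2 n2 sh2) => r2 _.
  by rewrite e1 e2 in r2; apply: (rch_trans r1 r2).
right.
have hP : sh ([set e] :|: Pp).
  case: (eqVneq Pp set0) => [->|nP]; first by rewrite setU0 short1.
  move: A1; rewrite nP andbT => /negbT.
  have -> : Y :|: Q = ~: ([set e] :|: Pp).
    by apply/setP => x; move: (p1 x) (p2 x); rewrite /ex3 !inE; bcase2.
  by rewrite shortC negbK.
have hS : sh ([set e] :|: S).
  case: (eqVneq S set0) => [->|nS]; first by rewrite setU0 short1.
  move: A2; rewrite nS andbT => /negbT.
  have -> : X :|: Rr = ~: ([set e] :|: S).
    by apply/setP => x; move: (p1 x) (p2 x); rewrite /ex3 !inE; bcase2.
  by rewrite shortC negbK.
have s1 : forall x, x \in Pp -> x \in X by move=> x; rewrite !inE => /andP[].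
have n1 : X :\: Pp != set0.
  apply/negP => /eqP h0; move: hP.
  have -> : [set e] :|: Pp = ~: Y.
    apply/setP => x; move/setP: h0 => /(_ x).
    by move: (p1 x) (p2 x); rewrite /ex3 !inE; bcase2.
  by rewrite shortC sY.
case: (mv21 hv s1 n1 hP) => r1 v1.
have s2 : forall x, x \in S -> x \in Y by move=> x; rewrite !inE => /andP[].
have n2 : Y :\: S != set0.
  apply/negP => /eqP h0; move: hP.
  have -> : [set e] :|: Pp = ~: Y'.
    apply/setP => x; move/setP: h0 => /(_ x).
    by move: (p1 x) (p2 x); rewrite /ex3 !inE; bcase2.
  by rewrite shortC sY'.
have e2 : (X :\: Pp) :|: S = Y'.
  by apply/setP => x; move: (p1 x) (p2 x); rewrite /ex3 !inE; bcase2.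
have sh2 : sh ((X :\: Pp) :|: S) by rewrite e2.
case: (mv32 v1 s2 n2 sh2) => r2 v2.
have s3 : forall x, x \in Pp -> x \in [set e] :|: Pp by move=> x hx; rewrite inE hx orbT.
have n3 : ([set e] :|: Pp) :\: Pp != set0.
  by apply: (neq0_of (x := e)); move: (p1 e); rewrite /ex3 !inE eqxx; bcase2.
have e3 : (Y :\: S) :|: Pp = X'.
  by apply/setP => x; move: (p1 x) (p2 x); rewrite /ex3 !inE; bcase2.
have sh3 : sh ((Y :\: S) :|: Pp) by rewrite e3.
case: (mv13 v2 s3 n3 sh3) => r3 _.
have e4 : ([set e] :|: Pp) :\: Pp = [set e].
  by apply/setP => x; move: (p1 x) (p2 x); rewrite /ex3 !inE; bcase2.
by move: (rch_trans (rch_trans r1 r2) r3); rewrite e4 e2 e3.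
Qed.


Lemma flip e X Y S1 : vtx [set e] X Y -> (forall x, x \in S1 -> x \in X) ->
  S1 != set0 -> X :\: S1 != set0 -> sh ([set e] :|: S1) ->
  sh ([set e] :|: (X :\: S1)) ->
  rch 3 (v3 [set e] X Y) (v3 [set e] Y X).
Proof.
move=> hv sS n1 n2 h1 h2.
have hv0 := hv; case/vtxP: hv0 => _ nX nY p1 _.
case: (mv21 hv sS n2 h1) => r1 v1.
have s2 : forall x, x \in [set e] -> x \in [set e] :|: S1.
  by move=> x hx; rewrite inE hx.
case/set0P': n1 => s0 s0S.
have n3 : ([set e] :|: S1) :\: [set e] != set0.
  apply: (neq0_of (x := s0)); move: s0S (introT implyP (sS s0)) (p1 s0).
  by rewrite /ex3 !inE; bcase2.
have h2' : sh ((X :\: S1) :|: [set e]) by rewrite setUC.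
case: (mv12 v1 s2 n3 h2') => r2 v2.
have s3 : forall x, x \in X :\: S1 -> x \in (X :\: S1) :|: [set e].
  by move=> x hx; rewrite inE hx.
have n4 : ((X :\: S1) :|: [set e]) :\: (X :\: S1) != set0.
  by apply: (neq0_of (x := e)); move: (p1 e); rewrite /ex3 !inE eqxx; bcase2.
have e1 : (([set e] :|: S1) :\: [set e]) :|: (X :\: S1) = X.
  apply/setP => x; move: (introT implyP (sS x)) (p1 x).
  by rewrite /ex3 !inE; bcase2.
have e2 : ((X :\: S1) :|: [set e]) :\: (X :\: S1) = [set e].
  apply/setP => x; move: (introT implyP (sS x)) (p1 x).
  by rewrite /ex3 !inE; bcase2.
have h3 : sh ((([set e] :|: S1) :\: [set e]) :|: (X :\: S1)).
  by rewrite e1; case/vtxP: hv => _ _ _ _ /and3P[].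
case: (mv21 v2 s3 n4 h3) => r3 _.
rewrite e1 e2 in r3.
exact: (rch_cyc_r (rch_trans (rch_trans r1 r2) r3) (cyc1 _ _ _)).
Qed.

Lemma hub e U : e \notin U -> ~~ sh ([set e] :|: U) ->
  (forall x, x \in U -> sh ([set e] :|: [set x]) /\ L x <= L e) ->
  exists X Y, vtx [set e] X Y /\ rch 3 (v3 [set e] X Y) (v3 [set e] Y X).
Proof.
move=> eU lU hU.
pose F := fun S => (S \subset U) && sh ([set e] :|: S).
have F0 : F set0 by rewrite /F sub0set setU0 short1.
case: (arg_maxnP (fun S => #|S|) F0) => S1 /andP[sSU shS] maxS.
have: ~~ (U \subset S1).
  apply/negP => h; have eSU : S1 = U by apply/eqP; rewrite eqEsubset sSU h.
  by move: shS lU; rewrite eSU => ->.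
case/subsetPn => z zU zS.
have [shz Lz] := hU z zU.
have nS1 : S1 != set0.
  apply/negP => /eqP h0.
  have Fz : F [set z] by rewrite /F shz andbT sub1set.
  by move: (maxS _ Fz); rewrite h0 cards1 cards0.
have nF : ~~ F (z |: S1).
  by apply/negP => hF; move: (maxS _ hF); rewrite cardsU1 zS /geq /= ltnn.
have sub' : z |: S1 \subset U.
  by apply/subsetP => x; rewrite !inE => /orP[/eqP ->|/(subsetP sSU)].
move: nF; rewrite /F sub' /= => nsh.
have sSU' := subsetP sSU.
have ez : e != z by apply/negP => /eqP ez; move: eU; rewrite ez zU.
pose X := S1 :|: [set z]; pose Y := ~: ([set e] :|: X).
have eX : e \notin X.
  rewrite !inE negb_or ez andbT; apply/negP => /sSU'; by rewrite (negbTE eU).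
have shX : sh X.
  rewrite shortE setlenU; last first.
    by move=> x hx; rewrite inE => /eqP ex; subst x; move: hx; rewrite (negbTE zS).
  move: shS; rewrite shortE setlenU ?setlen1; last first.
    move=> x; rewrite inE => /eqP -> /sSU'; by rewrite (negbTE eU).
  lra.
have shY : sh Y.
  rewrite shortC; move: nsh.
  have -> : [set e] :|: (z |: S1) = [set e] :|: X.
    by apply/setP => x; rewrite !inE; bcase2.
  by [].
have nY : Y != set0.
  apply/negP => /eqP h0.
  have eqX : X = ~: [set e].
    apply/setP => x; move/setP: h0 => /(_ x); move: eX; rewrite !inE.
    case E: (x == e); first by move/eqP: E => ->; bcase2.
    by bcase2.
  by move: shX; rewrite eqX shortC short1.
have hv : vtx [set e] X Y.
  apply/vtxP; split.
  - by apply: (neq0_of (x := e)); rewrite inE.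
  - by apply: (neq0_of (x := z)); rewrite !inE eqxx orbT.
  - exact: nY.
  - move=> x; move: eX; rewrite /ex3 !inE.
    case E: (x == e); first by move/eqP: E => ->; bcase2.
    by bcase2.
  - by rewrite short1 shX shY.
exists X, Y; split => //.
apply: (flip (S1 := S1)) => //.
- by move=> x hx; rewrite inE hx.
- by apply: (neq0_of (x := z)); rewrite !inE eqxx zS orbT.
- have -> : X :\: S1 = [set z].
    by apply/setP => x; rewrite !inE; case E: (x == z); [move/eqP: E => ->; rewrite zS|]; bcase2.
  exact: shz.
Qed.


Lemma vtx_of u : is_vertex L u -> exists A B C, u = v3 A B C /\ vtx A B C.
Proof.
case: u => [|A [|B [|C [|D s]]]] // h.
by exists A, B, C.
Qed.

Lemma rot_to u x : is_vertex L u ->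
  exists P Q W, [/\ cyc_eq u (v3 P Q W), x \in P & vtx P Q W].
Proof.
case/vtx_of => A [B [C [-> hv]]].
have hv0 := hv; case/vtxP: hv0 => _ _ _ p _.
move: (p x); rewrite /ex3.
case hA: (x \in A); first by exists A, B, C; split=> //; apply: cyc_refl.
case hB: (x \in B); first by exists B, C, A; split=> //; [apply: cyc1 | apply: vtx_rot].
case hC: (x \in C) => // _.
by exists C, A, B; split=> //; [apply: cyc2 | apply: vtx_rot2].
Qed.

Lemma inc_split A B C S : vtx A B C -> (forall x, x \in S -> x \in A) ->
  S != set0 -> A :\: S != set0 -> incident L [:: S; A :\: S; B; C] (v3 A B C).
Proof.
move=> hv sS n1 n2; case: (edge_of hv sS n1 n2) => he _; split => //.
exists [:: S :|: (A :\: S); B; C]; first by rewrite /merges inE eqxx.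
have -> : S :|: (A :\: S) = A.
  by apply/setP => x; move: (introT implyP (sS x)); rewrite !inE; bcase.
by split; [exact: vtx_adm | exact: cyc_refl].
Qed.

Lemma adj_self_big A B C : vtx A B C -> (2 <= #|A|)%N -> adjacent L (v3 A B C) (v3 A B C).
Proof.
move=> hv hA.
have: (0 < #|A|)%N by apply: leq_trans hA.
case/card_gt0P => x xA.
have sS : forall y, y \in [set x] -> y \in A by move=> y; rewrite inE => /eqP ->.
have n1 : [set x] != set0 by apply: (neq0_of (x := x)); rewrite inE.
have n2 : A :\: [set x] != set0.
  rewrite -cards_eq0; move: hA; rewrite (cardsD1 x A) xA.
  by case: #|A :\ x|.
by exists [:: [set x]; A :\: [set x]; B; C]; split; apply: inc_split.
Qed.

Lemma adj_self u : (4 <= n)%N -> is_vertex L u -> adjacent L u u.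
Proof.
move=> hn /vtx_of [A [B [C [-> hv]]]].
have hv0 := hv; case/vtxP: hv0 => _ _ _ p _.
have eT : [set: 'I_n] = A :|: (B :|: C).
  by apply/setP => x; move: (p x); rewrite /ex3 !inE; bcase.
have hc : (n <= #|A| + (#|B| + #|C|))%N.
  have h0 : #|A :|: (B :|: C)| = n by rewrite -eT cardsT card_ord.
  case: (leq_card_setU A (B :|: C)) => h1 _.
  case: (leq_card_setU B C) => h2 _.
  lia.
case: (leqP 2 #|A|) => hA; first exact: adj_self_big.
case: (leqP 2 #|B|) => hB.
  have := adj_self_big (vtx_rot hv) hB => h.
  apply: (adj_cyc_l (u := v3 B C A)); last exact: cyc_sym (cyc1 _ _ _).
  exact: adj_cyc_r h (cyc_sym (cyc1 _ _ _)).
case: (leqP 2 #|C|) => hC; last by lia.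
have := adj_self_big (vtx_rot2 hv) hC => h.
apply: (adj_cyc_l (u := v3 C A B)); last exact: cyc_sym (cyc2 _ _ _).
exact: adj_cyc_r h (cyc_sym (cyc2 _ _ _)).
Qed.

Lemma walk_mono k k' u v : walk_le L k u v -> (k <= k')%N -> walk_le L k' u v.
Proof. by case=> p [h1 h2 h3] hk; exists p; split=> //; apply: leq_trans hk. Qed.

Lemma rch_final k k' u v : (4 <= n)%N -> is_vertex L u -> rch k u v ->
  (k <= k')%N -> (1 <= k')%N -> walk_le L k' u v.
Proof.
move=> hn hu h hk hk1; case: (rch_walk h) => [hc|hw]; last exact: walk_mono hw hk.
apply: (walk_mono (k := 1)) => //.
exists [:: v]; split=> //; case=> //= _.
exact: adj_cyc_r (adj_self hn hu) hc.
Qed.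

Lemma conn_core e :
  (forall u, is_vertex L u -> exists Q W, rch 2 u (v3 [set e] Q W) /\ vtx [set e] Q W) ->
  (exists X Y, vtx [set e] X Y /\ rch 3 (v3 [set e] X Y) (v3 [set e] Y X)) ->
  forall u v, is_vertex L u -> is_vertex L v -> rch 12 u v.
Proof.
move=> H1 [X [Y [hG hf]]] u v hu hv.
have go : forall w, is_vertex L w ->
    rch 4 w (v3 [set e] X Y) \/ rch 5 w (v3 [set e] Y X).
  move=> w hw; case: (H1 w hw) => Q [W [r1 v1]].
  case: (pairl v1 hG) => r2; [left | right]; exact: (rch_trans r1 r2).
case: (go u hu) => ru; case: (go v hv) => rv.
- exact: (rch_mono (rch_trans ru (rch_sym rv))).
- exact: (rch_mono (rch_trans (rch_trans ru hf) (rch_sym rv))).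
- exact: (rch_mono (rch_trans (rch_trans ru (rch_sym hf)) (rch_sym rv))).
- exact: (rch_mono (rch_trans ru (rch_sym rv))).
Qed.


Definition orient (a b : 'I_n) (s : sq) : bool :=
  match s with
  | [:: X; Y; Z] => [|| (a \in X) && (b \in Y), (a \in Y) && (b \in Z) | (a \in Z) && (b \in X)]
  | _ => false
  end.

Lemma orient_cyc a b s t : size s = 3%N -> cyc_eq s t -> orient a b s = orient a b t.
Proof.
case: s => [|X [|Y [|Z [|W s]]]] // _ [k ->].
case: (rot_norm [:: X; Y; Z] k) => k' hk ->.
case: k' hk => [|[|[|[|k']]]] // _; rewrite /rot /=; bcase.
Qed.

Lemma merges_size (e m : sq) : m \in merges e -> size m = 3%N.
Proof.
case: e => [|A [|B [|C [|D [|E s]]]]] //=; rewrite !inE.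
by case/or4P => /eqP ->.
Qed.

Lemma orient_edge a b c A B C D m1 m2 :
  (forall X, sh X -> [&& ~~ ((a \in X) && (b \in X)), ~~ ((a \in X) && (c \in X))
                         & ~~ ((b \in X) && (c \in X))]) ->
  is_edge L [:: A; B; C; D] ->
  m1 \in merges [:: A; B; C; D] -> m2 \in merges [:: A; B; C; D] ->
  admissible L m1 -> admissible L m2 -> orient a b m1 = orient a b m2.
Proof.
move=> sep /edgeP [_ _ _ _ [p _]].
have shs : forall P1 P2 P3, admissible L [:: P1; P2; P3] -> [/\ sh P1, sh P2 & sh P3].
  by move=> P1 P2 P3 /andP[_] /=; rewrite andbT => /and3P[].
move: (p a) (p b) (p c) => pa pb pc.
rewrite /merges !inE => h1 h2.
case/or4P: h1 => /eqP -> /shs [/sep s1 /sep s2 /sep s3];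
case/or4P: h2 => /eqP -> /shs [/sep t1 /sep t2 /sep t3];
move: pa pb pc s1 s2 s3 t1 t2 t3; rewrite /ex4 /orient !inE; bcase.
Qed.


Lemma orient_adj a b c u v :
  (forall X, sh X -> [&& ~~ ((a \in X) && (b \in X)), ~~ ((a \in X) && (c \in X))
                         & ~~ ((b \in X) && (c \in X))]) ->
  adjacent L u v -> orient a b u = orient a b v.
Proof.
move=> sep [e [[he [m1 hm1 [ha1 hc1]]] [_ [m2 hm2 [ha2 hc2]]]]].
have hs := hm1; move: he hm1 hm2.
case: e hs => [|A [|B [|C [|D [|E s]]]]] hs he hm1 hm2;
  try by move: hs; rewrite /merges /= in_nil.
rewrite -(orient_cyc a b (merges_size hm1) hc1) -(orient_cyc a b (merges_size hm2) hc2).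
exact: (orient_edge sep he hm1 hm2 ha1 ha2).
Qed.

Lemma orient_walk a b c k u v :
  (forall X, sh X -> [&& ~~ ((a \in X) && (b \in X)), ~~ ((a \in X) && (c \in X))
                         & ~~ ((b \in X) && (c \in X))]) ->
  walk_le L k u v -> orient a b u = orient a b v.
Proof.
move=> sep [p [_ hl hn]].
have H : forall i, (i <= size p)%N -> orient a b (nth u (u :: p) i) = orient a b u.
  elim=> [|i IH] //= hi.
  rewrite -(IH (ltnW hi)); symmetry; apply: (orient_adj sep).
  exact: hn.
move: (H (size p) (leqnn _)).
have -> : nth u (u :: p) (size p) = last u p by move: (nth_last u (u :: p)).
by rewrite hl => ->.
Qed.

Lemma disc_hub a b c u :
  (forall X, sh X -> [&& ~~ ((a \in X) && (b \in X)), ~~ ((a \in X) && (c \in X))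
                         & ~~ ((b \in X) && (c \in X))]) ->
  a != b -> is_vertex L u ->
  rch 2 u (if orient a b u
           then v3 [set a] [set b] (~: ([set a] :|: [set b]))
           else v3 [set a] (~: ([set a] :|: [set b])) [set b]).
Proof.
move=> sep ab hu.
have shc : forall X, a \in ~: X -> b \in ~: X -> sh X.
  move=> X h1 h2; rewrite -(setCK X) shortC; apply/negP => /sep.
  by rewrite h1 h2.
case: (rot_to a hu) => P [Q [W [hc aP hv]]].
have hv0 := hv; case/vtxP: hv0 => _ _ _ p /and3P[sP sQ sW].
rewrite (orient_cyc a b _ hc); last by move/vtx_of: hu => [A [B [C [-> _]]]].
apply: (rch_cyc_l (cyc_sym hc)).
have bP : b \notin P by apply/negP => bP; move: (sep _ sP); rewrite aP bP.
have nab : forall x, x \in [set a] :|: [set b] = (x == a) || (x == b).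
  by move=> x; rewrite !inE.
pose A' := P :\ a.
have sA : forall x, x \in A' -> x \in P by move=> x; rewrite !inE => /andP[].
have n1 : P :\: A' != set0 by apply: (neq0_of (x := a)); rewrite !inE eqxx aP.
have eA : P :\: A' = [set a].
  apply/setP => x; rewrite !inE; case E: (x == a) => /=; last by case: (x \in P).
  by move/eqP: E => ->; rewrite aP.
case bQ: (b \in Q).
  have -> : orient a b (v3 P Q W) by rewrite /= aP bQ.
  have sh1 : sh (W :|: A').
    apply: shc; rewrite !inE ?eqxx ?aP ?andbT ?orbF //=.
    - by move: (p a); rewrite /ex3 aP; bcase2.
    - by move: (p b); rewrite /ex3 bQ (negbTE bP); bcase2.
  case: (mv13 hv sA n1 sh1) => r1 v1.
  have sB : forall x, x \in Q :\ b -> x \in Q by move=> x; rewrite !inE => /andP[].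
  have n2 : Q :\: (Q :\ b) != set0 by apply: (neq0_of (x := b)); rewrite !inE eqxx bQ.
  have sh2 : sh ((W :|: A') :|: (Q :\ b)).
    apply: shc; rewrite !inE ?eqxx ?aP ?bQ ?andbT ?orbF //=.
    - by move: (p a); rewrite /ex3 aP; bcase2.
    - by rewrite eq_sym ab /=; move: (p b); rewrite /ex3 bQ (negbTE bP); bcase2.
  case: (mv23 v1 sB n2 sh2) => r2 _.
  have e2 : Q :\: (Q :\ b) = [set b].
    apply/setP => x; rewrite !inE; case E: (x == b) => /=; last by case: (x \in Q).
    by move/eqP: E => ->; rewrite bQ.
  have e3 : (W :|: A') :|: (Q :\ b) = ~: ([set a] :|: [set b]).
    apply/setP => x; rewrite !inE.
    case E: (x == a); first by move/eqP: E => ->; move: (p a); rewrite /ex3 aP; bcase2.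
    case E': (x == b); first by move/eqP: E' => ->; move: (p b); rewrite /ex3 bQ; bcase2.
    by move: (p x); rewrite /ex3; bcase2.
  by move: (rch_trans r1 r2); rewrite eA e2 e3.
have bW : b \in W by move: (p b); rewrite /ex3 bQ (negbTE bP); bcase2.
have -> : orient a b (v3 P Q W) = false.
  by rewrite /= bQ (negbTE bP); move: (p a); rewrite /ex3 aP; bcase2.
have sh1 : sh (Q :|: A').
  apply: shc; rewrite !inE ?eqxx ?aP ?andbT ?orbF //=.
  - by move: (p a); rewrite /ex3 aP; bcase2.
  - by rewrite bQ (negbTE bP) andbF.
case: (mv12 hv sA n1 sh1) => r1 v1.
have sB : forall x, x \in W :\ b -> x \in W by move=> x; rewrite !inE => /andP[].
have n2 : W :\: (W :\ b) != set0 by apply: (neq0_of (x := b)); rewrite !inE eqxx bW.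
have sh2 : sh ((Q :|: A') :|: (W :\ b)).
  apply: shc; rewrite !inE ?eqxx ?aP ?bQ ?andbT ?orbF //=.
  - by move: (p a); rewrite /ex3 aP; bcase2.
  - by rewrite eq_sym ab (negbTE bP).
case: (mv32 v1 sB n2 sh2) => r2 _.
have e2 : W :\: (W :\ b) = [set b].
  apply/setP => x; rewrite !inE; case E: (x == b) => /=; last by case: (x \in W).
  by move/eqP: E => ->; rewrite bW.
have e3 : (Q :|: A') :|: (W :\ b) = ~: ([set a] :|: [set b]).
  apply/setP => x; rewrite !inE.
  case E: (x == a); first by move/eqP: E => ->; move: (p a); rewrite /ex3 aP; bcase2.
  case E': (x == b); first by move/eqP: E' => ->; move: (p b); rewrite /ex3 bW; bcase2.
  by move: (p x); rewrite /ex3; bcase2.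
by move: (rch_trans r1 r2); rewrite eA e2 e3.
Qed.


Lemma sl2 x y : x != y -> sl ([set x] :|: [set y]) = L x + L y.
Proof.
move=> xy; rewrite setlenU ?setlen1 // => z; rewrite !inE => /eqP -> /eqP h.
by move: xy; rewrite h eqxx.
Qed.

Lemma pair_long x y X : x != y -> x \in X -> y \in X -> T < 2%:R * (L x + L y) -> ~~ sh X.
Proof.
move=> xy hx hy hT; rewrite shortE -leNgt.
have : sl ([set x] :|: [set y]) <= sl X.
  by apply: setlen_le => z; rewrite !inE => /orP[] /eqP ->.
rewrite sl2 //; lra.
Qed.

Lemma slT : sl [set: 'I_n] = T.
Proof. by rewrite /setlen /totlen; apply: eq_bigl => i; rewrite inE. Qed.

Lemma main_sec (a b c : 'I_n) : (4 <= n)%N ->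
  a != b -> a != c -> b != c ->
  L b <= L a -> L c <= L b ->
  (forall i, i \notin [set a; b; c] -> L i <= L c) ->
  (L b + L c < T / 2%:R ->
     forall u v, is_vertex L u -> is_vertex L v -> walk_le L 13 u v) /\
  (T / 2%:R < L b + L c ->
     forall u v, is_vertex L u -> is_vertex L v ->
       (exists k, walk_le L k u v) -> walk_le L 7 u v).
Proof.
move=> hn ab ac bc hba hcb hrest.
have hT := Tpos a.
have Lcb : forall x, x != a -> x != b -> L x <= L c.
  move=> x xa xb; case: (eqVneq x c) => [->|xc]; first exact: lexx.
  by apply: hrest; rewrite !inE (negbTE xa) (negbTE xb) (negbTE xc).
have Lbb : forall x, x != a -> L x <= L b.
  move=> x xa; case: (eqVneq x b) => [->|xb]; first exact: lexx.
  exact: le_trans (Lcb x xa xb) hcb.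
have Lab : forall x, L x <= L a.
  move=> x; case: (eqVneq x a) => [->|xa]; first exact: lexx.
  exact: le_trans (Lbb x xa) hba.
split.
  move=> hconn u v hu hv.
  apply: (rch_final (k := 12)) => //.
  case hab: (sh ([set a] :|: [set b])).
    have hab2 : 2%:R * (L a + L b) < T by move: hab; rewrite shortE sl2.
    apply: (conn_core (e := a)) => //.
      move=> w hw; case: (rot_to a hw) => P [Q [W [hc aP hvP]]].
      case: (reduce hvP aP (fun z _ => Lab z)) => Q' [W' [r hv']].
      exists Q', W'; split=> //; exact: rch_cyc_l (cyc_sym hc) r.
    apply: (hub (U := ~: [set a])).
    - by rewrite !inE eqxx.
    - rewrite setUCr shortE slT; lra.
    - move=> x; rewrite !inE => xa; split; last exact: Lab.
      rewrite shortE sl2 ?(negbTE xa) //; last by rewrite eq_sym.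
      move: (Lbb x xa); lra.
  have hab2 : T < 2%:R * (L a + L b).
    by move/negbT/not_short: hab; rewrite sl2.
  apply: (conn_core (e := b)) => //.
    move=> w hw; case: (rot_to b hw) => P [Q [W [hc bP hvP]]].
    have aP : a \notin P.
      apply/negP => aP; case/vtxP: hvP => _ _ _ _ /and3P[sP _ _].
      by move: (pair_long ab aP bP hab2); rewrite sP.
    have mx : forall z, z \in P -> L z <= L b.
      move=> z zP; apply: Lbb; apply/negP => /eqP za; subst z.
      by move: zP; rewrite (negbTE aP).
    case: (reduce hvP bP mx) => Q' [W' [r hv']].
    exists Q', W'; split=> //; exact: rch_cyc_l (cyc_sym hc) r.
  apply: (hub (U := ~: ([set a] :|: [set b]))).
  - by rewrite !inE eqxx orbT.
  - have -> : [set b] :|: ~: ([set a] :|: [set b]) = ~: [set a].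
      apply/setP => x; rewrite !inE.
      case E: (x == b); last by case: (x == a).
      by move/eqP: E => ->; rewrite eq_sym (negbTE ab).
    by rewrite shortC short1.
  - move=> x; rewrite !inE negb_or => /andP[xa xb]; split; last exact: Lbb.
    rewrite shortE sl2; last by rewrite eq_sym.
    move: (Lcb x xa xb); lra.
move=> hdisc.
have sep : forall X, sh X -> [&& ~~ ((a \in X) && (b \in X)), ~~ ((a \in X) && (c \in X))
                         & ~~ ((b \in X) && (c \in X))].
  move=> X hX; apply/and3P; split; apply/negP => /andP[h1 h2].
  - have H := pair_long ab h1 h2; rewrite hX in H; suff: false by []; apply: H; lra.
  - have H := pair_long ac h1 h2; rewrite hX in H; suff: false by []; apply: H; lra.
  - have H := pair_long bc h1 h2; rewrite hX in H; suff: false by []; apply: H; lra.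
move=> u v hu hv [k hw].
have ho := orient_walk sep hw.
have ru := disc_hub sep ab hu.
have rv := disc_hub sep ab hv.
rewrite -ho in rv.
apply: (rch_final (k := 4)) => //.
exact: (rch_trans ru (rch_sym rv)).
Qed.

End Poly.

Theorem mainTheorem9 (R : realFieldType) (n : nat) (L : 'I_n -> R)
    (a b c : 'I_n) :
  (4 <= n)%N ->
  (forall i, 0 < L i) ->
  (forall i, L i < \sum_(j < n | j != i) L j) ->
  (forall J : {set 'I_n}, setlen L J != setlen L (~: J)) ->
  a != b -> a != c -> b != c ->
  L b <= L a -> L c <= L b ->
  (forall i, i \notin [set a; b; c] -> L i <= L c) ->
  (L b + L c < totlen L / 2%:R ->
     forall u v, is_vertex L u -> is_vertex L v -> walk_le L 13 u v) /\
  (totlen L / 2%:R < L b + L c ->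
     forall u v, is_vertex L u -> is_vertex L v ->
       (exists k, walk_le L k u v) -> walk_le L 7 u v).
Proof.
move=> hn hpos htri hgen ab ac bc hba hcb hrest.
exact: (main_sec hpos htri hgen hn ab ac bc hba hcb hrest).
Qed.
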